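(* Let $a,r$ be real numbers with $0<a<a+r<1$ and let $c=b_{\mathbb{D},2}(a,a+r)$. Let $R$ be a number satisfying $b_{\mathbb{D},2}(a,a-R)=c$ and $-1<a-R<a$. Then \[ B_{\mathbb{D},2}(a;c)\subset\{z:|z-a|<R\}\cap\mathbb{D}. \]
   Context: $\mathbb{D}=\{z\in\mathbb{C}:|z|<1\}$. For $z_1,z_2\in\mathbb{D}$, $b_{\mathbb{D},2}(z_1,z_2)=\sup_{z\in\partial\mathbb{D}}\frac{|z_1-z_2|}{\sqrt{|z_1-z|^2+|z-z_2|^2}}$, and $B_{\mathbb{D},2}(a;c)=\{z\in\mathbb{D}: b_{\mathbb{D},2}(a,z)<c\}$. *)

(* Defs.v *)
From Stdlib Require Import Reals.
From Coquelicot Require Import Coquelicot.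
Open Scope R_scope.

Definition in_disk (z : C) : Prop := Cmod z < 1.

Definition b2_values (z1 z2 : C) (t : R) : Prop :=
  exists z : C, Cmod z = 1 /\
    t = Cmod (Cminus z1 z2) / sqrt ((Cmod (Cminus z1 z)) ^ 2 + (Cmod (Cminus z z2)) ^ 2).

(* b_{D,2}(z1,z2) = sup over the unit circle (finite for z1, z2 in D). *)
Definition b_D2 (z1 z2 : C) : R := real (Lub_Rbar (b2_values z1 z2)).

Definition B_D2 (a : C) (c : R) (z : C) : Prop := in_disk z /\ b_D2 a z < c.

(* Main.v *)
Require Import Defs.
From Stdlib Require Import Reals Lra Psatz.
From Coquelicot Require Import Coquelicot.
Open Scope R_scope.

Lemma Cmod2 (p : C) : Cmod p ^ 2 = fst p ^ 2 + snd p ^ 2.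
Proof. unfold Cmod. rewrite pow2_sqrt; [reflexivity | nra]. Qed.

Lemma le_lub (E : R -> Prop) x M : E x -> (forall t, E t -> t <= M) ->
  x <= real (Lub_Rbar E) /\ real (Lub_Rbar E) <= M.
Proof.
  intros Ex HM. destruct (Lub_Rbar_correct E) as [Hub Hl].
  assert (H1 := Hub x Ex). assert (H2 := Hl (Finite M) (fun t Et => HM t Et)).
  destruct (Lub_Rbar E); simpl in *; tauto.
Qed.

Lemma ratio_le d1 S1 d2 S2 : 0 <= d1 -> 0 < S1 -> 0 <= d2 -> 0 < S2 ->
  d1 ^ 2 * S2 <= d2 ^ 2 * S1 -> d1 / sqrt S1 <= d2 / sqrt S2.
Proof.
  intros h1 h2 h3 h4 h5.
  assert (H : sqrt (d1 ^ 2 * S2) <= sqrt (d2 ^ 2 * S1)) by (apply sqrt_le_1_alt; lra).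
  rewrite !sqrt_mult_alt, !sqrt_pow2 in H by (auto; nra).
  assert (s1 := sqrt_lt_R0 _ h2). assert (s2 := sqrt_lt_R0 _ h4).
  replace (d1 / sqrt S1) with (d1 * sqrt S2 / (sqrt S1 * sqrt S2)) by (field; lra).
  replace (d2 / sqrt S2) with (d2 * sqrt S1 / (sqrt S1 * sqrt S2)) by (field; lra).
  apply Rmult_le_compat_r; [ | lra].
  left; apply Rinv_0_lt_compat; nra.
Qed.

Lemma b2_bound z1 z2 t : b2_values z1 z2 t -> t <= 2.
Proof.
  intros [u [_ ->]].
  set (d := Cmod (Cminus z1 z2)).
  set (S := Cmod (Cminus z1 u) ^ 2 + Cmod (Cminus u z2) ^ 2).
  assert (Hd : d ^ 2 <= 2 * S).
  { unfold d, S. rewrite !Cmod2. destruct z1 as [a b], z2 as [c e], u as [p q]; simpl. pose proof (pow2_ge_0 (a-p-(p-c))); pose proof (pow2_ge_0 (b-q-(q-e))); nra. }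
  assert (d0 : 0 <= d) by apply Cmod_ge_0.
  assert (S0 : 0 <= S) by (unfold S; nra).
  destruct (Rle_lt_or_eq_dec 0 S S0) as [Sp | Sz].
  - replace 2 with (2 / sqrt 1) by (rewrite sqrt_1; field).
    apply ratio_le; lra.
  - rewrite <- Sz in *. assert (d = 0) by nra. rewrite H. unfold Rdiv. lra.
Qed.

Lemma unit_near (mx my : R) : exists p q, p ^ 2 + q ^ 2 = 1 /\
  (p - mx) ^ 2 + (q - my) ^ 2 = (1 - sqrt (mx ^ 2 + my ^ 2)) ^ 2.
Proof.
  destruct (Req_dec (mx ^ 2 + my ^ 2) 0) as [H | H].
  - assert (mx = 0) by nra. assert (my = 0) by nra. subst.
    exists 1, 0. rewrite H, sqrt_0. split; ring.
  - assert (Hs : 0 < mx ^ 2 + my ^ 2) by nra.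
    set (rm := sqrt (mx ^ 2 + my ^ 2)).
    assert (rp : 0 < rm) by (apply sqrt_lt_R0; auto).
    assert (r2 : rm ^ 2 = mx ^ 2 + my ^ 2) by (apply pow2_sqrt; lra).
    exists (mx / rm), (my / rm). split.
    + replace ((mx / rm) ^ 2 + (my / rm) ^ 2) with ((mx ^ 2 + my ^ 2) / rm ^ 2) by (field; lra).
      rewrite r2; field; lra.
    + replace ((mx / rm - mx) ^ 2 + (my / rm - my) ^ 2) with ((mx ^ 2 + my ^ 2) / rm ^ 2 * (1 - rm) ^ 2) by (field; lra).
      rewrite r2; field; lra.
Qed.
Theorem theorem3p17 (a r R0 : R) :
  0 < a -> a < a + r -> a + r < 1 ->
  b_D2 (RtoC a) (RtoC (a - R0)) = b_D2 (RtoC a) (RtoC (a + r)) ->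
  -1 < a - R0 -> a - R0 < a ->
  forall z : C, B_D2 (RtoC a) (b_D2 (RtoC a) (RtoC (a + r))) z ->
    Cmod (Cminus z (RtoC a)) < R0 /\ in_disk z.
Proof.
  intros Ha Har Har1 Heq HR1 HR2 z [Hz Hb].
  rewrite <- Heq in Hb. split; [| exact Hz].
  destruct z as [x y].
  set (d := Cmod (Cminus (x, y) (RtoC a))).
  apply Rnot_le_lt; intro Hd.
  assert (d0 : 0 <= d) by apply Cmod_ge_0.
  assert (Hd2 : d ^ 2 = (x - a) ^ 2 + y ^ 2) by (unfold d; rewrite Cmod2; simpl; ring).
  assert (Hxy : x ^ 2 + y ^ 2 < 1).
  { unfold in_disk in Hz. pose proof (Cmod2 (x, y)). simpl in H.
    pose proof (Cmod_ge_0 (x, y)). nra. }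
  set (mx := (a + x) / 2). set (my := y / 2).
  set (rm := sqrt (mx ^ 2 + my ^ 2)).
  set (m0 := a - R0 / 2).
  set (S0 := 2 * (1 - Rabs m0) ^ 2 + R0 ^ 2 / 2).
  assert (Hm0 : Rabs m0 < 1) by (unfold m0; apply Rabs_def1; lra).
  assert (HS0 : 0 < S0) by (unfold S0; nra).
  assert (Hrm1 : rm < 1).
  { unfold rm. rewrite <- sqrt_1. apply sqrt_lt_1_alt. unfold mx, my. pose proof (pow2_ge_0 (a-x)). pose proof (pow2_ge_0 y). assert (a*a<1) by nra. replace (((a + x) / 2) ^ 2 + (y / 2) ^ 2) with (((a+x)^2+y^2)/4) by field. pose proof (pow2_ge_0 (a+x)). split; nra. }
  assert (Hrm2 : Rabs (a - d / 2) <= rm).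
  { unfold rm. rewrite <- sqrt_Rsqr_abs. apply sqrt_le_1_alt. unfold Rsqr, mx, my. replace (((a + x) / 2) ^ 2 + (y / 2) ^ 2) with (((a+x)^2+y^2)/4) by field.
    assert (Rabs (x - a) <= d).
    { rewrite <- (sqrt_pow2 d), <- sqrt_Rsqr_abs by lra. apply sqrt_le_1_alt.
      unfold Rsqr. nra. }
    assert (x - a <= d) by (pose proof (Rle_abs (x - a)); lra).
    assert (- (x - a) <= d) by (pose proof (Rabs_Ropp (x-a)); pose proof (Rle_abs (-(x-a))); lra).
    nra. }
  assert (Hup : b_D2 (RtoC a) (RtoC (a - R0)) <= R0 / sqrt S0).
  { unfold b_D2.
    assert (HE : forall t, b2_values (RtoC a) (RtoC (a - R0)) t -> t <= R0 / sqrt S0).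
    { intros t [[p q] [Hu ->]].
      assert (Hpq : p ^ 2 + q ^ 2 = 1).
      { pose proof (Cmod2 (p, q)). simpl in H. rewrite Hu in H. lra. }
      assert (Hc : Cmod (Cminus (RtoC a) (RtoC (a - R0))) = R0).
      { unfold Cmod; simpl. replace ((a + - (a - R0)) * ((a + - (a - R0)) * 1) + (0 + - 0) * ((0 + - 0) * 1)) with (R0 ^ 2) by ring.
        apply sqrt_pow2; lra. }
      rewrite Hc. apply ratio_le; try lra.
      - rewrite !Cmod2; simpl. pose proof (pow2_ge_0 (a - p - (p - (a - R0)))). pose proof (pow2_ge_0 q). nra.
      - rewrite !Cmod2; simpl. apply Rmult_le_compat_l; [pose proof (pow2_ge_0 R0); lra|].
        unfold S0, m0. assert (p <= 1 /\ -1 <= p) by nra.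
        destruct (Rle_or_lt 0 (a - R0 / 2)).
        + rewrite Rabs_right by lra. nra.
        + rewrite Rabs_left by lra. nra. }
    refine (proj2 (le_lub _ _ _ _ HE)).
    exists (1, 0). split; [| reflexivity].
    unfold Cmod; simpl. replace (1 * (1 * 1) + 0 * (0 * 1)) with 1 by ring. apply sqrt_1.
  }
  assert (HR0 : 0 < R0) by lra.
  assert (Hlow : R0 / sqrt S0 <= b_D2 (RtoC a) (x, y)).
  { destruct (unit_near mx my) as [p [q [Hpq Hpm]]]. fold rm in Hpm.
    set (Su := Cmod (Cminus (RtoC a) (p, q)) ^ 2 + Cmod (Cminus (p, q) (x, y)) ^ 2).
    assert (HSu : Su = 2 * (1 - rm) ^ 2 + d ^ 2 / 2).
    { unfold Su. rewrite <- Hpm, Hd2, !Cmod2. unfold mx, my. simpl. field. }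
    assert (Hdd : Cmod (Cminus (RtoC a) (x, y)) = d).
    { unfold d, Cmod; simpl. f_equal. ring. }
    apply Rle_trans with (d / sqrt Su).
    - assert (Hkey : R0 * (1 - rm) <= d * (1 - Rabs m0)).
      { apply Rle_trans with (R0 * (1 - Rabs (a - d / 2))).
        - apply Rmult_le_compat_l; lra.
        - unfold m0. destruct (Rle_or_lt 0 (a - R0 / 2)), (Rle_or_lt 0 (a - d / 2)).
          + rewrite (Rabs_right (a - R0/2)), (Rabs_right (a - d/2)) by lra. nra.
          + rewrite (Rabs_right (a - R0/2)), (Rabs_left (a - d/2)) by lra. nra.
          + rewrite (Rabs_left (a - R0/2)), (Rabs_right (a - d/2)) by lra. nra.
          + rewrite (Rabs_left (a - R0/2)), (Rabs_left (a - d/2)) by lra. nra. }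
      assert (Hk0 : 0 <= R0 * (1 - rm)) by nra.
      apply ratio_le; try lra.
      + rewrite HSu. nra.
      + rewrite HSu. unfold S0.
        assert (Hsq : (R0 * (1 - rm)) ^ 2 <= (d * (1 - Rabs m0)) ^ 2) by nra.
        nra.
    - refine (proj1 (le_lub _ _ 2 _ (b2_bound _ _))).
      exists (p, q). split.
      + unfold Cmod; simpl. replace (p * (p * 1) + q * (q * 1)) with (p ^ 2 + q ^ 2) by ring.
        rewrite Hpq. apply sqrt_1.
      + rewrite Hdd. reflexivity. }
  lra.
Qed.
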